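(* Let $G$ be a gradual mechanism implementing an SCF $f$ that has no SPL opportunity, and let $G'$ be obtained from $G$ through a COA or through an inverse ILL. Then $G'$ has no SPL opportunity.
   Context: Setting. $N$ finite set of agents, $X$ finite set of outcomes, finite type spaces $\Theta_i$; $\Theta=\prod_i\Theta_i$; an SCF is $f:\Theta\to X$. Dynamic game forms. A dynamic game form with perfect recall consists of a finite tree $\bar H$ of histories (finite sequences of action profiles) containing the empty initial history $\varnothing$, closed under prefixes ($\preceq$ prefix order, $\prec$ strict); terminal histories $Z$, non-terminal $H$; at each $h\in H$ a nonempty set $\mathbb P(h)$ of agents move simultaneously with available actions $A_i(h)$, all action profiles leading to successors; $\mathbb P(\varnothing)=N$; each agent's decision nodes $H_i$ are partitioned into information sets $\boldsymbol H_i$, with available actions constant on information sets ($A(\boldsymbol h_i)$) and perfect recall; $\mathcal X:Z\to X$. For information sets of $i$, $\boldsymbol h_i\preceq\bar{\boldsymbol h}_i$ if $h\preceq\bar h$ for some $h\in\boldsymbol h_i,\bar h\in\bar{\boldsymbol h}_i$; $\sigma_{a_i}(\boldsymbol h_i)$ is the set of immediate successor information sets of $i$ reached after $i$ chooses $a_i$ at $\boldsymbol h_i$; for a history $\bar h$, $\boldsymbol h_i\prec\bar h$ means $h\prec\bar h$ for some $h\in\boldsymbol h_i$. Gradual mechanisms. A GM implementing $f$ is such a game form in which (1) actions of $i$ are nonempty subsets of $\Theta_i$; (2) at every $h\in H_i$ the available actions of $i$ are pairwise disjoint with union $\Theta_i(h)$, where for any history $h$, $\Theta_i(h)$ is the last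 action of $i$ in $h$ ($\Theta_i$ if $i$ has not acted); (3) $\mathcal X(z)=f(\theta)$ for all $z\in Z$, $\theta\in\Theta(z)=\prod_i\Theta_i(z)$. $\Theta_{-i}(\boldsymbol h_i)=\bigcup_{h\in\boldsymbol h_i}\prod_{j\ne i}\Theta_j(h)$. SPL opportunity. A GM has an SPL opportunity if there exist an agent $i$, an information set $\boldsymbol h_i$ and $a_i\in A(\boldsymbol h_i)$ with $|a_i|\ge 2$ such that $\{z\in Z:\boldsymbol h_i\prec z,\ \Theta_i(z)=a_i\}\ne\varnothing$ (a splitting then appends, at each such $z$, a move of $i$ alone choosing between the two parts of a partition of $a_i$). Coalescing (COA). Given information sets $\boldsymbol h_i,\bar{\boldsymbol h}_i$ of $i$ and $a_i\in A(\boldsymbol h_i)$ with $\bar{\boldsymbol h}_i\in\sigma_{a_i}(\boldsymbol h_i)$ and $\Theta_{-i}(\boldsymbol h_i)=\Theta_{-i}(\bar{\boldsymbol h}_i)$: agent $i$'s move at $\bar{\boldsymbol h}_i$ is deleted and at $\boldsymbol h_i$ agent $i$ instead chooses from $(A(\boldsymbol h_i)\setminus\{a_i\})\cup A(\bar{\boldsymbol h}_i)$; every history through $\boldsymbol h_i$ with $i$ choosing $a_i$ is replaced by the corresponding histories in which $i$ chooses some $\bar a_i\in A(\bar{\boldsymbol h}_i)$ at $\boldsymbol h_i$ (if $\bar{\boldsymbol h}_i$ is reached, $\bar a_i$ is the action taken there; otherwise one copy per $\bar a_i$), with other agents' moves, information sets (except the deleted $\bar{\boldsymbol h}_i$) and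 outcomes carried over. Illuminating (ILL). Given an information set $\boldsymbol h_i$ and a partition $\{\boldsymbol h_i^1,\boldsymbol h_i^2\}$ of it into nonempty sets: keep histories, other agents' information sets and outcomes; replace every information set $\bar{\boldsymbol h}_i$ of $i$ with $\boldsymbol h_i\preceq\bar{\boldsymbol h}_i$ by the nonempty sets among $\bar{\boldsymbol h}_i^k=\{\bar h\in\bar{\boldsymbol h}_i:\exists h\in\boldsymbol h_i^k,\ h\preceq\bar h\}$, $k=1,2$. An inverse ILL transforms $G$ into $G'$ whenever an ILL transforms $G'$ into $G$. *)

(* Defs.v *)
From mathcomp Require Import all_boot.
Set Implicit Arguments. Unset Strict Implicit. Unset Printing Implicit Defensive.

(* Gradual mechanisms as dynamic game forms.
   - N : agents (finType); T i : type space of agent i (finType); X : outcomes.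
   - An action profile assigns to every agent either None (does not move) or
     Some a with a : {set T i} (in a GM actions are subsets of types).
   - A history is a finite sequence of action profiles.
   - A game form is given by the tree of histories (a predicate), for every
     agent i an information relation [same i] (an equivalence relation on
     the decision nodes of i whose classes are the information sets), and
     the outcome function (only its values on terminal histories matter). *)
Section GM.
Variables (N : finType) (T : N -> finType) (X : Type).

Definition prof := forall j : N, option {set T j}.
Definition hseq := seq prof.

Record gform := GForm {
  hist : hseq -> Prop;
  same : forall i : N, hseq -> hseq -> Prop;
  out  : hseq -> X }.

Definition prefix (p q : hseq) := exists t, q = p ++ t.
Definition sprefix (p q : hseq) := exists t, t <> [::] /\ q = p ++ t.

Definition terminal (G : gform) (z : hseq) :=
  hist G z /\ forall s, ~ hist G (rcons z s).

Definition dec (G : gform) (i : N) (h : hseq) :=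
  hist G h /\ exists s : prof, hist G (rcons h s) /\ s i <> None.

Definition avail (G : gform) (i : N) (h : hseq) (x : {set T i}) :=
  exists s : prof, hist G (rcons h s) /\ s i = Some x.
Arguments avail G i h x : clear implicits.

(* Theta_i(h): last action of i in h, Theta_i if i has not acted *)
Definition thlast (i : N) (h : hseq) : {set T i} :=
  foldl (fun acc (s : prof) => match s i with Some x => x | None => acc end)
        setT h.

(* i's experience along h: (decision prefix, action taken there) *)
Fixpoint decs (i : N) (pre h : hseq) : seq (hseq * {set T i}) :=
  match h with
  | [::] => [::]
  | s :: t => match s i with
              | Some x => (pre, x) :: decs i (rcons pre s) t
              | None => decs i (rcons pre s) t
              end
  end.

Definition tree_ok (G : gform) :=
  (* finite: bounded depth (branching is finite since profiles range over a
     finite type) *)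
  (exists n, forall h, hist G h -> size h <= n) /\
  hist G [::] /\
  (forall h t, hist G (h ++ t) -> hist G h).

Definition moves_ok (G : gform) :=
  (forall s : prof, hist G [:: s] -> forall j, s j <> None) /\
  (forall h (s : prof), hist G (rcons h s) -> exists j, s j <> None) /\
  (forall h (s s' : prof) j, hist G (rcons h s) -> hist G (rcons h s') ->
      (s j = None <-> s' j = None)) /\
  (forall h (s : prof), (exists s0, hist G (rcons h s0)) ->
      (forall j, exists s', hist G (rcons h s') /\ s' j = s j) ->
      hist G (rcons h s)).

Definition info_ok (G : gform) :=
  (forall i x y, same G i x y -> dec G i x /\ dec G i y) /\
  (forall i x, dec G i x -> same G i x x) /\
  (forall i x y, same G i x y -> same G i y x) /\
  (forall i x y z, same G i x y -> same G i y z -> same G i x z) /\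
  (forall i x y (a : {set T i}), same G i x y -> avail G i x a -> avail G i y a) /\
  (* perfect recall: same sequence of own information sets and actions *)
  (forall i x y, same G i x y ->
     size (decs i [::] x) = size (decs i [::] y) /\
     forall k, k < size (decs i [::] x) ->
       same G i (nth ([::], setT) (decs i [::] x) k).1
                (nth ([::], setT) (decs i [::] y) k).1 /\
       (nth ([::], setT) (decs i [::] x) k).2 =
       (nth ([::], setT) (decs i [::] y) k).2).

Definition is_game_form (G : gform) := tree_ok G /\ moves_ok G /\ info_ok G.

Definition is_GM (f : (forall j : N, T j) -> X) (G : gform) :=
  is_game_form G /\
  (forall h (s : prof) j x, hist G (rcons h s) -> s j = Some x -> x != set0) /\
  (forall i h, dec G i h ->
     (forall x y, avail G i h x -> avail G i h y -> x <> y -> [disjoint x & y]) /\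
     (forall t, t \in thlast i h <-> exists x, avail G i h x /\ t \in x)) /\
  (forall z, terminal G z ->
     forall theta : (forall j : N, T j), (forall j, theta j \in thlast j z) ->
       out G z = f theta).

Definition has_SPL (G : gform) :=
  exists (i : N) (h : hseq) (a : {set T i}) (z h' : hseq),
    dec G i h /\ avail G i h a /\ 1 < #|a| /\
    same G i h h' /\ terminal G z /\ sprefix h' z /\ thlast i z = a.

(* The information set of i is the class of h0; the partition {h^1, h^2}
   is h^1 = class /\ S, h^2 = class \ S. *)
Definition ILL (G G2 : gform) :=
  exists (i : N) (h0 : hseq) (S : hseq -> Prop),
    let part1 y := exists h, same G i h0 h /\ S h /\ prefix h y in
    let part2 y := exists h, same G i h0 h /\ ~ S h /\ prefix h y in
    let affected x := exists h h', same G i h0 h /\ same G i x h' /\ prefix h h' in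
    dec G i h0 /\
    (exists h, same G i h0 h /\ S h) /\ (exists h, same G i h0 h /\ ~ S h) /\
    (forall h, hist G2 h <-> hist G h) /\
    (forall z, terminal G z -> out G2 z = out G z) /\
    (forall j x y, j <> i -> (same G2 j x y <-> same G j x y)) /\
    (forall x y, same G2 i x y <->
       (same G i x y /\
        (affected x -> (part1 x /\ part1 y) \/ (part2 x /\ part2 y)))).

Definition inv_ILL (G G' : gform) := is_game_form G' /\ ILL G' G.

Definition imm_succ (G : gform) (i : N) (h0 : hseq) (a : {set T i}) (h1 : hseq) :=
  exists h hb (s : prof) t, same G i h0 h /\ same G i h1 hb /\
    hb = h ++ s :: t /\ s i = Some a /\
    (forall k, k < size t -> (nth s t k) i = None).
Arguments imm_succ G i h0 a h1 : clear implicits.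

(* theta (restricted to agents j <> i) belongs to Theta_{-i}(class of h0) *)
Definition thminus (G : gform) (i : N) (h0 : hseq) (theta : forall j : N, T j) :=
  exists h, same G i h0 h /\ forall j, j <> i -> theta j \in thlast j h.

(* [coa_path pre g g'] : g' is the history of the coalesced game that
   corresponds to the continuation g (after prefix pre) of a history of G,
   where b in A(class h1) is the action chosen at the class of h0 instead of a
   (if the class of h1 is reached, b must be the action taken there). *)
Unset Implicit Arguments.
Inductive coa_path (G : gform) (i : N) (h0 h1 : hseq) (a b : {set T i}) :
    hseq -> hseq -> hseq -> Prop :=
| coa_nil (pre : hseq) : coa_path G i h0 h1 a b pre [::] [::]
| coa_choose (pre : hseq) (s s' : prof) t t' :
    same G i h0 pre -> s i = Some a -> s' i = Some b ->
    (forall j, j <> i -> s' j = s j) ->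
    coa_path G i h0 h1 a b (rcons pre s) t t' ->
    coa_path G i h0 h1 a b pre (s :: t) (s' :: t')
| coa_drop (pre : hseq) (s : prof) t t' :
    same G i h1 pre -> s i = Some b -> (forall j, j <> i -> s j = None) ->
    coa_path G i h0 h1 a b (rcons pre s) t t' ->
    coa_path G i h0 h1 a b pre (s :: t) t'
| coa_delete (pre : hseq) (s s' : prof) t t' :
    same G i h1 pre -> s i = Some b -> (exists j, j <> i /\ s j <> None) ->
    s' i = None -> (forall j, j <> i -> s' j = s j) ->
    coa_path G i h0 h1 a b (rcons pre s) t t' ->
    coa_path G i h0 h1 a b pre (s :: t) (s' :: t')
| coa_keep (pre : hseq) (s : prof) t t' :
    ~ (same G i h0 pre /\ s i = Some a) -> ~ same G i h1 pre ->
    coa_path G i h0 h1 a b (rcons pre s) t t' ->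
    coa_path G i h0 h1 a b pre (s :: t) (s :: t').
Set Implicit Arguments.

Definition COA (G G' : gform) :=
  exists (i : N) (h0 h1 : hseq) (a : {set T i}),
    dec G i h0 /\ dec G i h1 /\ avail G i h0 a /\ imm_succ G i h0 a h1 /\
    (forall theta, thminus G i h0 theta <-> thminus G i h1 theta) /\
    (forall x', hist G' x' <->
       exists g b, hist G g /\ avail G i h1 b /\ coa_path G i h0 h1 a b [::] g x') /\
    (forall z b z', terminal G z -> avail G i h1 b ->
       coa_path G i h0 h1 a b [::] z z' -> out G' z' = out G z) /\
    (forall j x' y', same G' j x' y' <->
       exists x y b1 b2, hist G x /\ hist G y /\
         avail G i h1 b1 /\ avail G i h1 b2 /\
         coa_path G i h0 h1 a b1 [::] x x' /\ coa_path G i h0 h1 a b2 [::] y y' /\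
         same G j x y /\ (j = i -> ~ same G i h1 x)).

End GM.

(* Main.v *)
Require Import Defs.
From mathcomp Require Import all_boot.
From Stdlib Require Import Classical.
Set Implicit Arguments. Unset Strict Implicit. Unset Printing Implicit Defensive.

Section Aux.
Variables (N : finType) (T : N -> finType) (X : Type).
Implicit Types (G : gform T X) (h p q r : hseq T).

Definition noi (i : N) (r : hseq T) : Prop :=
  foldr (fun (s : prof T) P => s i = None /\ P) True r.

Lemma noi_cat i r1 r2 : noi i r1 -> noi i r2 -> noi i (r1 ++ r2).
Proof. by elim: r1 => //= s r1 IH [? ?] ?; split => //; apply: IH. Qed.

Lemma noi_rcons i r s : noi i r -> s i = None -> noi i (rcons r s).
Proof. by move=> H1 H2; rewrite -cats1; apply: noi_cat => //=. Qed.

Lemma noi_nth i (s : prof T) t :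
  (forall k, k < size t -> (nth s t k) i = None) -> noi i t.
Proof.
elim: t => //= s0 t IH H; split; first by apply: (H 0).
by apply: IH => k Hk; apply: (H k.+1).
Qed.

Lemma thlast_rcons i h (s : prof T) :
  thlast i (rcons h s) = match s i with Some x => x | None => thlast i h end.
Proof. by rewrite /thlast -cats1 foldl_cat. Qed.

Lemma thlast_noi i h r : noi i r -> thlast i (h ++ r) = thlast i h.
Proof.
elim/last_ind: r => [|r s IH]; first by rewrite cats0.
move=> H.
have [H1 H2] : noi i r /\ s i = None.
  elim: r H {IH} => /= [[]|s0 r IH [? H]] //; have := IH H; tauto.
by rewrite -rcons_cat thlast_rcons H2 IH.
Qed.

Lemma last_act i (g : hseq T) : noi i g \/
  exists p s r, g = p ++ s :: r /\ s i = Some (thlast i g) /\ noi i r.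
Proof.
elim/last_ind: g => [|g s IH]; first by left.
case E: (s i) => [x|].
  right; exists g, s, [::]; rewrite cats1 thlast_rcons E; split => //.
case: IH => [H|[p [s0 [r [-> [H1 H2]]]]]].
  by left; apply: noi_rcons.
right; exists p, s0, (rcons r s); rewrite thlast_rcons E rcons_cat /=.
split => //; split => //; exact: noi_rcons.
Qed.

Lemma decs_cat i pre h t :
  decs i pre (h ++ t) = decs i pre h ++ decs i (pre ++ h) t.
Proof.
elim: h pre => [|s h IH] pre /=; first by rewrite cats0.
by case: (s i) => [x|]; rewrite IH cat_rcons.
Qed.

Lemma decs_noi i pre r : noi i r -> decs i pre r = [::].
Proof. by elim: r pre => //= s r IH pre [-> H]; apply: IH. Qed.

End Aux.

Section Coa.
Variables (N : finType) (T : N -> finType) (X : Type).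
Variables (G : gform T X) (i : N) (h0 h1 : hseq T) (a b : {set T i}).

Notation cp := (coa_path N T X G i h0 h1 a b).

Lemma coa_cat pre g g' u u' : cp pre g g' -> cp (pre ++ g) u u' ->
  cp pre (g ++ u) (g' ++ u').
Proof.
elim=> {pre g g'} [pre|pre s s' t t' H1 H2 H3 H4 _ IH|pre s t t' H1 H2 H3 _ IH
  |pre s s' t t' H1 H2 H3 H4 H5 _ IH|pre s t t' H1 H2 _ IH];
  rewrite ?cats0 // => Hu /=.
- by apply: coa_choose => //; apply: IH; rewrite cat_rcons.
- by apply: coa_drop => //; apply: IH; rewrite cat_rcons.
- by apply: coa_delete => //; apply: IH; rewrite cat_rcons.
- by apply: coa_keep => //; apply: IH; rewrite cat_rcons.
Qed.

Lemma coa_other k pre g g' : k <> i -> cp pre g g' ->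
  forall pre', thlast k pre = thlast k pre' ->
  thlast k (pre ++ g) = thlast k (pre' ++ g').
Proof.
move=> nk; elim=> {pre g g'} [pre|pre s s' t t' H1 H2 H3 H4 _ IH|pre s t t' H1 H2 H3 _ IH
  |pre s s' t t' H1 H2 H3 H4 H5 _ IH|pre s t t' H1 H2 _ IH] pre' E;
  rewrite ?cats0 //.
- by rewrite -!cat_rcons; apply: IH; rewrite !thlast_rcons H4 // E.
- by rewrite -cat_rcons; apply: IH; rewrite !thlast_rcons H3 // E.
- by rewrite -!cat_rcons; apply: IH; rewrite !thlast_rcons H5 // E.
- by rewrite -!cat_rcons; apply: IH; rewrite !thlast_rcons E.
Qed.

Definition LastA (P : hseq T) := exists p (s : prof T) r,
  P = p ++ s :: r /\ same G i h0 p /\ s i = Some a /\ noi i r.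

Lemma LastA_nil : ~ LastA [::].
Proof. by case=> [[|??] [? [? []]]]. Qed.

Lemma LastA_rcons P (s : prof T) : LastA (rcons P s) ->
  match s i with Some x => same G i h0 P /\ x = a | None => LastA P end.
Proof.
case=> p [s0 [r [E [H1 [H2 H3]]]]].
case/lastP: r E H3 => [|r s1].
  rewrite cats1 => /rcons_inj [-> ->] _.
  by rewrite H2.
rewrite -rcons_cons -rcons_cat => /rcons_inj [-> ->] H3.
have [H4 H5] : noi i r /\ s1 i = None.
  elim: r H3 => /= [[]|s2 r IH [? H]] //; have := IH H; tauto.
rewrite H5; exists p, s0, r; tauto.
Qed.

Hypothesis PR : forall x, same G i h1 x -> LastA x.

Definition Inv (P P' : hseq T) :=
  (thlast i P' = thlast i P \/ (thlast i P = a /\ thlast i P' = b)) /\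
  (LastA P -> thlast i P' = b).

Lemma coa_inv pre g g' : cp pre g g' ->
  forall pre', Inv pre pre' -> Inv (pre ++ g) (pre' ++ g').
Proof.
elim=> {pre g g'} [pre|pre s s' t t' H1 H2 H3 H4 _ IH|pre s t t' H1 H2 H3 _ IH
  |pre s s' t t' H1 H2 H3 H4 H5 _ IH|pre s t t' H1 H2 _ IH] pre' [E1 E2];
  rewrite ?cats0 //.
- rewrite -!cat_rcons; apply: IH; rewrite /Inv !thlast_rcons H2 H3.
  by split; [right|].
- rewrite -cat_rcons; apply: IH; rewrite /Inv !thlast_rcons H2.
  have E := E2 (PR H1); split; [by left|by []].
- rewrite -!cat_rcons; apply: IH; rewrite /Inv !thlast_rcons H2 H4.
  have E := E2 (PR H1); split; [by left|by []].
- rewrite -!cat_rcons; apply: IH; rewrite /Inv !thlast_rcons.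
  case E: (s i) => [x|].
    split; first by left.
    move/LastA_rcons; rewrite E => -[? ?]; subst x; exfalso; tauto.
  split => // /LastA_rcons; rewrite E; exact: E2.
Qed.

End Coa.


Section PRsec.
Variables (N : finType) (T : N -> finType) (X : Type).
Variables (G : gform T X) (i : N) (h0 h1 : hseq T) (a : {set T i}).

Lemma decs_last k (q : hseq T) (s : prof T) r y : s k = Some y -> noi k r ->
  decs k [::] (q ++ s :: r) = rcons (decs k [::] q) (q, y).
Proof.
move=> Hs Hr; by rewrite decs_cat /= Hs (decs_noi _ Hr) cats1.
Qed.

Lemma PR_lemma : info_ok G -> imm_succ G h0 a h1 ->
  forall x, same G i h1 x -> LastA G h0 a x.
Proof.
move=> [_ [_ [Hsym [Htr [_ Hpr]]]]] [h [hb [s [t [E0 [E1 [Ehb [Es Et]]]]]]]] x Hx; subst hb.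
have Hxb : same G i x (h ++ s :: t) by apply: Htr (Hsym _ _ _ Hx) E1.
have [Hsz Hnth] := Hpr _ _ _ Hxb.
rewrite (decs_last h Es (noi_nth Et)) in Hsz Hnth.
case: (last_act i x) => [Hn|[q [s1 [r [Ex [Hs1 Hr]]]]]].
  by move: Hsz; rewrite decs_noi // size_rcons.
rewrite Ex (decs_last q Hs1 Hr) ?size_rcons in Hsz Hnth.
have := Hnth _ (ltnSn (size (decs i [::] q))).
move: Hsz => /eqP; rewrite eqSS => /eqP Hsz.
rewrite !nth_rcons ltnn eqxx Hsz ltnn eqxx /= => -[Hq Hy] //.
exists q, s1, r; rewrite Ex; split => //; split; last by rewrite Hs1 Hy.
by apply: Htr E0 (Hsym _ _ _ Hq).
Qed.

End PRsec.

Lemma SPL_of_terminal (N : finType) (T : N -> finType) (X : Type)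
  (f : (forall i : N, T i) -> X) (G : gform T X) k (z : hseq T) :
  is_GM f G -> terminal G z -> z <> [::] -> 1 < #|thlast k z| -> has_SPL G.
Proof.
move=> [[[_ [_ Hpre]] [[Hroot _] [_ [Hrefl _]]]] _] Hz Hne Hc.
case: z Hz Hne Hc => [|s0 r] // Hz _ Hc.
have Hs0 : s0 k <> None.
  apply: Hroot; apply: (Hpre [:: s0] r); exact: Hz.1.
case: (last_act k (s0 :: r)) => [/= [] //|[p [s [r' [E [Hs Hr]]]]]].
have Hp : hist G (rcons p s).
  by apply: (Hpre _ r'); rewrite cat_rcons -E; exact: Hz.1.
have Hdec : dec G k p.
  split; first by apply: (Hpre _ [:: s]); rewrite cats1.
  by exists s; split => //; rewrite Hs.
exists k, p, (thlast k (s0 :: r)), (s0 :: r), p; split => //.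
split; first by exists s.
split => //; split; first by apply: Hrefl.
split => //; split => //; by exists (s :: r').
Qed.

Theorem mainTheorem12 (N : finType) (T : N -> finType) (X : Type)
  (f : (forall i : N, T i) -> X) (G G' : gform T X) :
  is_GM f G -> ~ has_SPL G ->
  (COA G G' \/ inv_ILL G G') ->
  is_GM f G' ->
  ~ has_SPL G'.
Proof.
move=> HG Hno Hc HG' [k [hh [a' [z' [h' [_ [_ [Hcard [_ [Hterm [Hsp Hth']]]]]]]]]]].
have Hz'ne : z' <> [::].
  by case: Hsp => t [Ht ->]; case: h' {Hth'} => //= ->.
case: Hc => [Hcoa|[_ Hill]]; last first.
  move: Hill => [i [h0 [S H]]]; simpl in H.
  case: H => [_ [_ [_ [Hh _]]]].
  apply: Hno; apply: (SPL_of_terminal (k := k) HG _ Hz'ne); last by rewrite Hth'.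
  split; first by apply/Hh; exact: Hterm.1.
  by move=> s /Hh; apply: Hterm.2.
move: Hcoa => [i [h0 [h1 [a [Hd0 [Hd1 [Hav [Himm [Hth [Hhist [Hout Hsame]]]]]]]]]]].
have HGf := HG; move: HGf => [[[[n Hn] [_ Hpre]] [_ Hinfo]] [_ [HGM2 _]]].
move: (Hinfo) => [Hdec [Hrefl [Hsym [Htr [Havc _]]]]].
have [g [b [Hg [Hb Hcp]]]] := (Hhist z').1 Hterm.1.
have Hnoext : forall g2 s', hist G g2 ->
    coa_path N T X G i h0 h1 a b [::] g2 (z' ++ [:: s']) -> False.
  move=> g2 s' H2 Hc2; apply: (Hterm.2 s'); apply/Hhist.
  by exists g2, b; rewrite -cats1.
have Hext : forall m g, n <= size g + m -> hist G g ->
    coa_path N T X G i h0 h1 a b [::] g z' ->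
    exists gs, terminal G gs /\ coa_path N T X G i h0 h1 a b [::] gs z'.
  elim=> [|m IH] g1 Hm Hg1 Hc1.
    exists g1; split => //; split => // s Hs.
    by have := Hn _ Hs; rewrite size_rcons; rewrite addn0 in Hm; move: Hm; case: ltngtP.
  case: (classic (terminal G g1)) => [Ht|Ht]; first by exists g1.
  have [s Hs] : exists s, hist G (rcons g1 s).
    apply: NNPP => Hne; apply: Ht; split => // s Hs; apply: Hne; by exists s.
  case: (classic (same G i h1 g1)) => [H1|H1].
    have [s1 [Hs1 Hs1i]] : avail G g1 b by apply: Havc Hb.
    case: (classic (exists j, j <> i /\ s1 j <> None)) => [Hj|Hj].
      exfalso; apply: (Hnoext (rcons g1 s1) (@dfwith N (fun j => option {set T j}) s1 i None)) => //.
      rewrite -cats1; apply: coa_cat => //=.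
      apply: coa_delete => //; first by rewrite dfwith_in.
        by move=> j Hji; rewrite dfwith_out //; apply/eqP => E; apply: Hji.
      exact: coa_nil.
    apply: (IH (rcons g1 s1)) => //; first by rewrite size_rcons addSnnS.
    rewrite -cats1 -[z']cats0; apply: coa_cat => //=.
    apply: coa_drop => //; last exact: coa_nil.
    move=> j Hji; apply: NNPP => Hn1; apply: Hj; by exists j.
  case: (classic (same G i h0 g1 /\ s i = Some a)) => [[H0 Ha]|H0].
    exfalso; apply: (Hnoext (rcons g1 s) (@dfwith N (fun j => option {set T j}) s i (Some b))) => //.
    rewrite -cats1; apply: coa_cat => //=.
    apply: coa_choose => //; first by rewrite dfwith_in.
      by move=> j Hji; rewrite dfwith_out //; apply/eqP => E; apply: Hji.
    exact: coa_nil.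
  exfalso; apply: (Hnoext (rcons g1 s) s) => //.
  rewrite -cats1; apply: coa_cat => //=.
  apply: coa_keep => //; exact: coa_nil.
have [gs [Hgs Hcs]] := Hext n g (leq_addl _ _) Hg Hcp.
have Hgsne : gs <> [::].
  by move=> E; subst gs; inversion Hcs; subst; apply: Hz'ne.
apply: Hno; apply: (SPL_of_terminal (k := k) HG Hgs Hgsne).
case: (classic (k = i)) => [E|E]; last first.
  by have := coa_other E Hcs (erefl (thlast k [::])); rewrite /= => ->; rewrite Hth'.
subst k.
have PR := PR_lemma Hinfo Himm.
have Hi0 : Inv G h0 a b [::] [::] by split; [left|move/LastA_nil].
have [[Ei|[Ea Eb]] _] := coa_inv PR Hcs Hi0; first by rewrite /= -Ei Hth'.
move: Ea Eb; rewrite /= => -> Eb.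
apply: (@leq_trans #|b|); first by rewrite -Eb Hth'.
apply: subset_leq_card.
move: Himm => [h [hb [s [t [E0 [E1 [Ehb [Es Et]]]]]]]].
have Hdb : dec G i hb by have := Hdec _ _ _ E1; case.
have Hbb : avail G hb b by apply: Havc Hb.
have Hthb : thlast i hb = a.
  by rewrite Ehb -cat_rcons thlast_noi ?thlast_rcons ?Es //; apply: noi_nth Et.
apply/subsetP => x Hx; rewrite -Hthb; apply/((HGM2 i hb Hdb).2 x).
by exists b.
Qed.
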